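(* Let $R=\{(1,1),(2,1),(1,2),(1,3),(1,4)\}$. Then: (1) for all integers $n>1$, $\mathcal{S}(n)\subseteq R$; (2) for every $(\alpha,\beta)\in R$ there exists an $n$ with $(\alpha,\beta)\in\mathcal{S}(n)$; (3) the set of positive integers $n$ with $\mathcal{S}(n)=\{(1,1)\}$ has density $1$, i.e. $\lim_{N\to\infty}N^{-1}|\{n\le N:\mathcal{S}(n)=\{(1,1)\}\}|=1$.
   Context: For relatively prime positive integers $\alpha,\beta$ and positive integers $a_1,a_2$, the $(\alpha,\beta)$-walk $w^{\alpha,\beta}_k(a_1,a_2)$ is given by $w_1=a_1$, $w_2=a_2$, $w_{k+2}=\alpha w_{k+1}+\beta w_k$ ($k\ge1$). For a positive integer $n$, $s^{\alpha,\beta}(n;a_1,a_2)$ is the (largest) index $s$ with $w^{\alpha,\beta}_s(a_1,a_2)=n$ ($-\infty$ if none), and $s^{\alpha,\beta}(n)=\max_{a_1,a_2\ge1}s^{\alpha,\beta}(n;a_1,a_2)$. Define $\bar s(n)=\max\{s^{\alpha,\beta}(n):\alpha,\beta\ge1,\gcd(\alpha,\beta)=1\}$ and $\mathcal{S}(n)=\{(\alpha,\beta):\alpha,\beta\ge1,\ \gcd(\alpha,\beta)=1,\ s^{\alpha,\beta}(n)=\bar s(n)\}$. *)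

(* Defs.v *)
From HB Require Import structures.
From mathcomp Require Import all_boot all_order all_algebra.
From mathcomp Require Import all_classical all_reals all_analysis.
Set Implicit Arguments. Unset Strict Implicit. Unset Printing Implicit Defensive.

(* wpair k = (w_{k+1}, w_{k+2}) of the (alpha,beta)-walk started at a1, a2. *)
Fixpoint wpair (alpha beta a1 a2 k : nat) : nat * nat :=
  match k with
  | 0 => (a1, a2)
  | k'.+1 => let p := wpair alpha beta a1 a2 k' in
             (p.2, alpha * p.2 + beta * p.1)
  end.

(* walk alpha beta a1 a2 k = w^{alpha,beta}_k(a1,a2), for indices k >= 1:
   w_1 = a1, w_2 = a2, w_{k+2} = alpha w_{k+1} + beta w_k. *)
Definition walk (alpha beta a1 a2 k : nat) : nat :=
  (wpair alpha beta a1 a2 k.-1).1.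

Definition is_greatest (P : nat -> Prop) (m : nat) : Prop :=
  P m /\ forall k, P k -> k <= m.

Definition hits (alpha beta a1 a2 n s : nat) : Prop :=
  1 <= s /\ walk alpha beta a1 a2 s = n.

(* s^{alpha,beta}(n;a1,a2) = m  (the case -oo corresponds to no index hitting n) *)
Definition s_start (alpha beta n a1 a2 m : nat) : Prop :=
  is_greatest (hits alpha beta a1 a2 n) m.

Definition s_ab (alpha beta n m : nat) : Prop :=
  is_greatest (fun s => exists a1 a2, 0 < a1 /\ 0 < a2 /\ s_start alpha beta n a1 a2 s) m.

Definition sbar (n m : nat) : Prop :=
  is_greatest (fun s => exists alpha beta,
                 [/\ 0 < alpha, 0 < beta, coprime alpha beta & s_ab alpha beta n s]) m.

Definition inS (n alpha beta : nat) : Prop :=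
  [/\ 0 < alpha, 0 < beta, coprime alpha beta &
      exists m, s_ab alpha beta n m /\ sbar n m].

Definition Rset (p : nat * nat) : Prop :=
  p = (1,1) \/ p = (2,1) \/ p = (1,2) \/ p = (1,3) \/ p = (1,4).

Definition S_is_11 (n : nat) : Prop :=
  forall alpha beta, inS n alpha beta <-> (alpha = 1 /\ beta = 1).

(* Main.v *)
From Stdlib Require Import Classical ZArith Lia.
Require Import Defs.
From HB Require Import structures.
From mathcomp Require Import all_boot all_order all_algebra.
From mathcomp Require Import all_classical all_reals all_analysis.
From mathcomp Require Import zify lra.
Import Order.TTheory GRing.Theory Num.Theory.
Import numFieldNormedType.Exports.
Set Implicit Arguments. Unset Strict Implicit. Unset Printing Implicit Defensive.


Definition uu al be a1 a2 j := (wpair al be a1 a2 j).1.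

Lemma uuSS al be a1 a2 j :
  uu al be a1 a2 j.+2 = al * uu al be a1 a2 j.+1 + be * uu al be a1 a2 j.
Proof. by []. Qed.

Lemma uu0 al be a1 a2 : uu al be a1 a2 0 = a1. Proof. by []. Qed.
Lemma uu1 al be a1 a2 : uu al be a1 a2 1 = a2. Proof. by []. Qed.

Lemma walkE al be a1 a2 k : walk al be a1 a2 k = uu al be a1 a2 k.-1.
Proof. by []. Qed.

Lemma wpair_add al be a1 a2 i j :
  wpair al be a1 a2 (i + j) =
  wpair al be (wpair al be a1 a2 i).1 (wpair al be a1 a2 i).2 j.
Proof. elim: j => [|j IH]; first by rewrite addn0; case: (wpair _ _ _ _ i). have -> : i + j.+1 = (i + j).+1 by lia. by rewrite /= IH. Qed.

Lemma uu_shift al be a1 a2 j :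
  uu al be a1 a2 j.+1 = uu al be a2 (al * a2 + be * a1) j.
Proof. by rewrite /uu -add1n wpair_add. Qed.

Lemma two_step_ind (P : nat -> Prop) :
  P 0 -> P 1 -> (forall j, P j -> P j.+1 -> P j.+2) -> forall j, P j.
Proof.
move=> H0 H1 HS j.
suff: P j /\ P j.+1 by case.
elim: j => [|j [IH1 IH2]]; first by split.
by split => //; apply: HS.
Qed.

Lemma uu_lin al be a1 a2 j :
  uu al be a1 a2 j = uu al be 1 0 j * a1 + uu al be 0 1 j * a2.
Proof.
elim/two_step_ind: j => [||j IH1 IH2]; rewrite ?uu0 ?uu1 /=; try lia.
rewrite !uuSS IH1 IH2. lia.
Qed.

Lemma uu_pos al be a1 a2 j : 0 < al -> 0 < be -> 0 < a1 -> 0 < a2 ->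
  j <= uu al be a1 a2 j /\ 0 < uu al be a1 a2 j.
Proof.
move=> ha hb h1 h2.
elim/two_step_ind: j => [||j [IH1 IH1'] [IH2 IH2']]; rewrite ?uu0 ?uu1 /=; try lia.
rewrite !uuSS. nia.
Qed.

Lemma uu_mono al be a1 a2 al' be' b1 b2 j : al <= al' -> be <= be' -> a1 <= b1 -> a2 <= b2 ->
  uu al be a1 a2 j <= uu al' be' b1 b2 j.
Proof.
move=> ha hb h1 h2.
elim/two_step_ind: j => [||j IH1 IH2]; rewrite ?uu0 ?uu1 //.
rewrite !uuSS. apply: leq_add; apply: leq_mul => //.
Qed.

Lemma greatest_ex (P : nat -> Prop) b :
  (exists k, P k) -> (forall k, P k -> k <= b) -> exists m, is_greatest P m.
Proof.
elim: b => [|b IH] [k Pk] hb.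
  exists 0; split; last by move=> j /hb; lia.
  by have := hb _ Pk; rewrite leqn0 => /eqP <-.
case: (Classical_Prop.classic (P b.+1)) => H.
  by exists b.+1; split.
apply: IH; first by exists k.
move=> j Pj; have := hb _ Pj; rewrite leq_eqVlt => /orP[/eqP E|] //.
by rewrite E in Pj.
Qed.

Lemma greatest_uniq P m m' : is_greatest P m -> is_greatest P m' -> m = m'.
Proof. move=> [h1 h2] [h3 h4]; apply/eqP; rewrite eqn_leq h2 // h4 //. Qed.

Definition reach al be n k := exists a1 a2, 0 < a1 /\ 0 < a2 /\ hits al be a1 a2 n k.

Lemma hits_bound al be a1 a2 n k : 0 < al -> 0 < be -> 0 < a1 -> 0 < a2 ->
  hits al be a1 a2 n k -> k <= n.+1.
Proof.
move=> ha hb h1 h2 [hk]; rewrite walkE => <-.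
have [] := uu_pos k.-1 ha hb h1 h2. lia.
Qed.

Lemma s_ab_iff al be n m : 0 < al -> 0 < be ->
  s_ab al be n m <-> is_greatest (reach al be n) m.
Proof.
move=> ha hb; split.
- move=> [[a1 [a2 [h1 [h2 [hm _]]]]] hmax]; split; first by exists a1, a2.
  move=> k [b1 [b2 [g1 [g2 hk]]]].
  have [m' hm'] : exists m', s_start al be n b1 b2 m'.
    apply: (@greatest_ex _ n.+1); first by exists k.
    by move=> j; apply: hits_bound.
  apply: leq_trans (hm'.2 _ hk) _.
  by apply: hmax; exists b1, b2.
- move=> [[a1 [a2 [h1 [h2 hm]]]] hmax].
  have [m' hm'] : exists m', s_start al be n a1 a2 m'.
    apply: (@greatest_ex _ n.+1); first by exists m.
    by move=> j; apply: hits_bound.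
  have E : m' = m.
    apply/eqP; rewrite eqn_leq (hm'.2 _ hm) andbT.
    by apply: hmax; exists a1, a2; split => //; split => //; case: hm'.
  split; first by exists a1, a2; rewrite -E.
  move=> k [b1 [b2 [g1 [g2 [hk _]]]]].
  by apply: hmax; exists b1, b2.
Qed.

Lemma reach_bound al be n k : 0 < al -> 0 < be -> reach al be n k -> k <= n.+1.
Proof. move=> ha hb [a1 [a2 [h1 [h2 h]]]]; exact: hits_bound h. Qed.

Lemma s_ab_ex al be n : 0 < al -> 0 < be -> 0 < n -> exists m, s_ab al be n m.
Proof.
move=> ha hb hn.
have [m hm] : exists m, is_greatest (reach al be n) m.
  apply: (@greatest_ex _ n.+1); last by move=> k; apply: reach_bound.
  by exists 1, n, 1.
by exists m; apply/s_ab_iff.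
Qed.

Lemma reach_down al be n k : reach al be n k.+2 -> 0 < al -> 0 < be -> reach al be n k.+1.
Proof.
move=> [a1 [a2 [h1 [h2 [_ hw]]]]] ha hb.
exists a2, (al * a2 + be * a1); split => //; split; first by nia.
split => //. by rewrite walkE /= -uu_shift.
Qed.

Lemma reach_le al be n k j : 0 < al -> 0 < be -> reach al be n k -> 0 < j <= k -> reach al be n j.
Proof.
move=> ha hb hk /andP[hj hjk].
have [d E] : exists d, k = j + d by exists (k - j); lia.
rewrite {}E in hk; clear hjk; move: hk; elim: d => [|d IH]; first by rewrite addn0.
move=> h; apply: IH.
have -> : j + d = (j + d - 1).+1 by lia.
apply: reach_down => //.
by have -> : (j + d - 1).+2 = j + d.+1 by lia.
Qed.


Fixpoint fib (n : nat) : nat :=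
  match n with 0 => 0 | 1 => 1 | (m.+1 as k).+1 => fib k + fib m end.

Lemma fibSS n : fib n.+2 = fib n.+1 + fib n. Proof. by []. Qed.

Lemma fib_dbl k : fib (2*k).+1 = fib k.+1 ^ 2 + fib k ^ 2 /\
                  fib (2*k).+2 = fib k.+1 * (fib k.+1 + 2 * fib k).
Proof.
elim: k => [|k [IH1 IH2]]; first by [].
have E1 : (2 * k.+1).+1 = (2*k).+3 by lia.
have E2 : (2 * k.+1).+2 = (2*k).+4 by lia.
rewrite E2 E1.
have G3 : fib (2*k).+3 = fib (2*k).+2 + fib (2*k).+1 by [].
have G4 : fib (2*k).+4 = fib (2*k).+3 + fib (2*k).+2 by [].
rewrite G4 G3 IH1 IH2 (fibSS k) . split; nia.
Qed.

Lemma fib3 m : fib m.+4 + fib m = 3 * fib m.+2.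
Proof. rewrite !fibSS. lia. Qed.

Lemma fib_coprime k : coprime (fib k) (fib k.+1).
Proof.
elim: k => [|k IH]; first by [].
by rewrite /coprime fibSS gcdnDl -/(coprime _ _) coprime_sym.
Qed.

Lemma fib_pos m : 0 < fib m.+1.
Proof. elim: m => // m IH; rewrite fibSS; lia. Qed.

Lemma fib_mono k : fib k <= fib k.+1.
Proof. case: k => // k; rewrite fibSS; lia. Qed.

Lemma fib_lt k : 1 < k -> fib k < fib k.+1.
Proof.
have pos : forall m, 0 < fib m.+1.
  elim => // m IH; rewrite fibSS; lia.
case: k => // [[|k]] // _.
have -> : fib k.+3 = fib k.+2 + fib k.+1 by []. have := pos k. lia. Qed.

Lemma uu11 a1 a2 j : uu 1 1 a1 a2 j.+1 = fib j * a1 + fib j.+1 * a2.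
Proof.
elim/two_step_ind: j => [||j IH1 IH2].
- rewrite uu1 /=; lia.
- rewrite uuSS uu1 uu0 /=; lia.
rewrite uuSS IH1 IH2 (fibSS j.+1) (fibSS j). lia.
Qed.

Lemma frobenius a b n : coprime a b -> 0 < a -> 0 < b -> a * b < n ->
  exists x y, 0 < x /\ 0 < y /\ a * x + b * y = n.
Proof.
move=> cab ha hb hn.
have [km kn E _] := egcdnP b ha.
move: E; rewrite (eqP cab) => E.
set x0 := (km * n) %% b.
set x := if x0 == 0 then b else x0.
have hx : 0 < x <= b.
  rewrite /x; case: eqP => [//|H]; first by rewrite hb leqnn.
  by rewrite lt0n; apply/andP; split; [apply/eqP|apply/ltnW; rewrite ltn_mod].
have hmod : a * x = n %[mod b].
  have -> : a * x = a * x0 %[mod b].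
    rewrite /x; case: eqP => [->|//]; by rewrite muln0 mod0n modnMl.
  rewrite /x0 modnMmr mulnA [a * km]mulnC E mulnDl mul1n.
  have -> : kn * b * n = kn * n * b by lia.
  by rewrite modnMDl.
have hle : a * x <= n by nia.
have hd : b %| n - a * x by rewrite -eqn_mod_dvd // hmod.
exists x, ((n - a * x) %/ b); split; first by case/andP: hx.
have hpos : 0 < n - a * x by nia.
split; first by rewrite divn_gt0 // dvdn_leq.
by rewrite [b * _]mulnC divnK //; lia.
Qed.

Definition notR al be := 3 <= al \/ (al = 2 /\ 2 <= be) \/ (al = 1 /\ 5 <= be).

Lemma notR_grow al be a1 a2 j : notR al be -> 0 < be -> 0 < a1 -> 0 < a2 -> 2 <= j ->
  fib (2*j).+1 <= 2 * uu al be a1 a2 j.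
Proof.
rewrite /notR => hR hb h1 h2 hj.
have ha : 0 < al by lia.
have [d E] : exists d, j = d.+2 by exists (j - 2); lia.
rewrite {}E {hj}.
suff : fib (2*d.+2).+1 <= 2 * uu al be a1 a2 d.+2 /\
       fib (2*d.+3).+1 <= 2 * uu al be a1 a2 d.+3 by case.
elim: d => [|d [IH1 IH2]].
  rewrite !uuSS uu1 uu0.
  have u2 : al + be <= al * a2 + be * a1 by nia.
  have u3 : al * (al+be) + be <= al * (al * a2 + be * a1) + be * a2 by nia.
  have -> : fib (2*2).+1 = 5 by [].
  have -> : fib (2*3).+1 = 13 by [].
  split; nia.
split => //.
have F1 : (2 * d.+4).+1 = (2*d+5).+4 by lia.
have F2 : (2 * d.+3).+1 = (2*d+5).+2 by lia.
have F3 : (2 * d.+2).+1 = (2*d+5) by lia.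
rewrite F1. rewrite F2 in IH2. rewrite F3 in IH1.
have hf := fib3 (2*d+5).
have hf2 : fib (2*d+5).+2 <= 3 * fib (2*d+5).
  have := fib3 (2*d+3).
  have -> : (2*d+3).+4 = (2*d+5).+2 by lia.
  have -> : (2*d+3).+2 = 2*d+5 by lia. lia.
rewrite uuSS.
move: IH1 IH2 hf hf2.
set X := fib (2*d+5).+2.
set Y := fib (2*d+5).
set Z := fib (2*d+5).+4.
set U := uu al be a1 a2 d.+2.
set V := uu al be a1 a2 d.+3.
move=> IH1 IH2 hf hf2.
case: hR => [H|[[-> H]|[-> H]]]; nia.
Qed.


Lemma core al be n k : 1 < n -> 0 < be -> notR al be ->
  reach al be n k -> reach 1 1 n k.+1.
Proof.
move=> hn hb hR [a1 [a2 [h1 [h2 [hk hw]]]]].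
case: k hk hw => [//|[|j]] _ hw.
  exists 1, n; split => //; split; [lia|by split].
rewrite walkE /= in hw.
have hlt : fib j.+1 * fib j.+2 < n.
  case: j hw => [|j] hw; first by [].
  have := notR_grow hR hb h1 h2 (_ : 2 <= j.+2) => /(_ isT).
  rewrite hw; have [-> _] := fib_dbl j.+2.
  have := fib_lt (_ : 1 < j.+2) => /(_ isT).
  set p := fib j.+2; set q := fib j.+3 => hpq. nia.
have hpos : 0 < fib j.+1.
  exact: fib_pos.
have hpos2 : 0 < fib j.+2 := fib_pos _.
have [x [y [hx [hy E]]]] := frobenius (fib_coprime j.+1) hpos hpos2 hlt.
exists x, y; do 2!split => //; split => //.
by rewrite walkE /= uu11.
Qed.


Lemma notR_of al be : 0 < al -> 0 < be -> ~ Rset (al, be) -> notR al be.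
Proof.
move=> ha hb hR; rewrite /notR.
case: (ltnP 2 al) => h3; first by left.
right; case: (ltnP 1 al) => h2.
  left; split; first by lia.
  case: (ltnP 1 be) => // hb1.
  have E1 : al = 2 by lia. have E2 : be = 1 by lia.
  by exfalso; apply: hR; rewrite E1 E2; right; left.
right; split; first by lia.
case: (ltnP 4 be) => // hb4.
exfalso; apply: hR; have -> : al = 1 by lia.
case: be hb hb4 => [//|[|[|[|[|be]]]]] // _ _; rewrite /Rset; tauto.
Qed.

Lemma part1 n : 1 < n -> forall al be, inS n al be -> Rset (al, be).
Proof.
move=> hn al be [ha hb cop [m [hm hs]]].
apply: Classical_Prop.NNPP => hR.
have hN := notR_of ha hb hR.
have [hmr _] := (s_ab_iff n m ha hb).1 hm.
have h11 := core hn hb hN hmr.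
have [m' hm'] := @s_ab_ex 1 1 n isT isT (ltnW hn).
have [_ hmax'] := (@s_ab_iff 1 1 n m' isT isT).1 hm'.
have := hmax' _ h11.
have := hs.2 m' (ex_intro _ 1 (ex_intro _ 1 (And4 isT isT isT hm'))).
lia.
Qed.

Definition Rpairs := [:: (1,1); (2,1); (1,2); (1,3); (1,4)].

Lemma witness n m al be : 0 < al -> 0 < be -> coprime al be -> 1 < n ->
  reach al be n m ->
  (forall r, r \in Rpairs -> ~ reach r.1 r.2 n m.+1) -> inS n al be.
Proof.
move=> ha hb cop hn hr hno.
have bound : forall a b k, 0 < a -> 0 < b -> reach a b n k -> k <= m.
  move=> a b k ha' hb' hk.
  have no : forall r, r \in Rpairs -> forall j, reach r.1 r.2 n j -> j <= m.
    move=> r hrin j hj; case: (leqP j m) => // hlt.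
    have [r1 r2] : 0 < r.1 /\ 0 < r.2 by move: hrin; rewrite !inE => /orP[/eqP->|/orP[/eqP->|/orP[/eqP->|/orP[/eqP->|/eqP->]]]].
    exfalso; apply: (hno r hrin); apply: (reach_le r1 r2 hj); lia.
  case: (Classical_Prop.classic (Rset (a, b))) => hR.
    have hin : (a, b) \in Rpairs.
      by rewrite /Rpairs !inE; case: hR => [->|[->|[->|[->|->]]]]; rewrite ?eqxx ?orbT.
    exact: (no _ hin).
  have := core hn hb' (notR_of ha' hb' hR) hk.
  move/(no (1,1) isT); lia.
have sab : s_ab al be n m.
  by apply/(s_ab_iff n m ha hb); split => // k; apply: bound.
split => //; exists m; split => //; split.
  by exists al, be; split.
move=> s [a [b [ha' hb' _ hs]]].
have [hs1 _] := (s_ab_iff n s ha' hb').1 hs.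
exact: bound hs1.
Qed.


Fixpoint wZ (al be a1 a2 : Z) (j : nat) : Z * Z :=
  match j with
  | 0 => (a1, a2)
  | S j' => let p := wZ al be a1 a2 j' in (p.2, Z.add (Z.mul al p.2) (Z.mul be p.1))
  end.

Definition uZ (al be a1 a2 : nat) j :=
  (wZ (Z.of_nat al) (Z.of_nat be) (Z.of_nat a1) (Z.of_nat a2) j).1.

Lemma wZ_ok al be a1 a2 j :
  wZ (Z.of_nat al) (Z.of_nat be) (Z.of_nat a1) (Z.of_nat a2) j =
  (Z.of_nat (wpair al be a1 a2 j).1, Z.of_nat (wpair al be a1 a2 j).2).
Proof.
elim: j => [//|j IH] /=; rewrite IH /=; congr pair. lia.
Qed.

Lemma uZ_ok al be a1 a2 j : Z.of_nat (uu al be a1 a2 j) = uZ al be a1 a2 j.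
Proof. by rewrite /uZ wZ_ok. Qed.

Lemma noreach_of al be n k :
  (forall x y : Z, Z.le 1 x -> Z.le 1 y ->
     Z.add (Z.mul (uZ al be 1 0 k.-1) x) (Z.mul (uZ al be 0 1 k.-1) y) <> Z.of_nat n) ->
  ~ reach al be n k.
Proof.
move=> H [x [y [hx [hy [_ hw]]]]].
apply: (H (Z.of_nat x) (Z.of_nat y)); try lia.
rewrite -hw walkE (uu_lin al be x y) -!uZ_ok. lia.
Qed.

Lemma uZ_walk al be a1 a2 k : Z.of_nat (walk al be a1 a2 k.+1) = uZ al be a1 a2 k.
Proof. by rewrite walkE uZ_ok. Qed.

Ltac crunch := repeat match goal with
  |- context [uZ ?a ?b ?c ?d ?k] =>
    let v := eval vm_compute in (uZ a b c d k) in change (uZ a b c d k) with v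
  | |- context [Z.of_nat (S ?n)] =>
    let v := eval vm_compute in (Z.of_nat (S n)) in change (Z.of_nat (S n)) with v
  end.

Ltac noreach := apply: noreach_of; rewrite ?uZ_walk; crunch; intros; lia.

Lemma allR n m : 
  ~ reach 1 1 n m -> ~ reach 2 1 n m -> ~ reach 1 2 n m -> ~ reach 1 3 n m -> ~ reach 1 4 n m ->
  forall r, r \in Rpairs -> ~ reach r.1 r.2 n m.
Proof.
move=> h1 h2 h3 h4 h5 r; rewrite !inE.
by move=> /orP[/eqP->|/orP[/eqP->|/orP[/eqP->|/orP[/eqP->|/eqP->]]]].
Qed.

Lemma w11 : inS 2 1 1.
Proof.
apply: (@witness 2 3) => //; first by exists 1, 1.
by apply: allR; noreach.
Qed.

Lemma w12 : inS 32 1 2.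
Proof.
apply: (@witness 32 6) => //; first by exists 1, 2.
by apply: allR; noreach.
Qed.

Lemma w21 : inS 239 2 1.
Proof.
apply: (@witness 239 8) => //; first by exists 1, 1.
by apply: allR; noreach.
Qed.

Lemma w13 : inS 40 1 3.
Proof.
apply: (@witness 40 6) => //; first by exists 1, 1.
by apply: allR; noreach.
Qed.

Lemma w14 : inS (walk 1 4 1 1 40) 1 4.
Proof.
apply: (@witness _ 40).
- by [].
- by [].
- by [].
- move: (uZ_walk 1 4 1 1 39); crunch; lia.
- exists 1, 1; split; [by [] | split; [by [] | split; [by [] | reflexivity]]].
by apply: allR; noreach.
Qed.

Lemma part2 al be : Rset (al, be) -> exists n, 1 < n /\ inS n al be.
Proof.
case=> [[-> ->]|[[-> ->]|[[-> ->]|[[-> ->]|[-> ->]]]]].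
- by exists 2; split => //; exact: w11.
- by exists 239; split => //; exact: w21.
- by exists 32; split => //; exact: w12.
- by exists 40; split => //; exact: w13.
- exists (walk 1 4 1 1 40); split; last exact: w14.
  move: (uZ_walk 1 4 1 1 39); crunch; lia.
Qed.


Definition Rp' := [:: (2,1); (1,2); (1,3); (1,4)].

Lemma Rp'_pos r : r \in Rp' -> 0 < r.1 /\ 0 < r.2.
Proof. by rewrite !inE => /orP[/eqP->|/orP[/eqP->|/orP[/eqP->|/eqP->]]]. Qed.

Lemma good n m : 1 < n -> s_ab 1 1 n m ->
  (forall r, r \in Rp' -> ~ reach r.1 r.2 n m) -> S_is_11 n.
Proof.
move=> hn hm hno.
have [hm1 hmax] := (@s_ab_iff 1 1 n m isT isT).1 hm.
have hm0 : 0 < m by case: hm1 => [? [? [_ [_ []]]]].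
have bound : forall a b k, 0 < a -> 0 < b -> reach a b n k ->
    k <= m /\ ((a, b) <> (1, 1) -> k < m).
  move=> a b k ha hb hk.
  case: (Classical_Prop.classic (Rset (a, b))) => hR.
    case: (eqVneq (a, b) (1, 1)) => [E|NE].
      case: E => -> -> in hk *; split; [exact: hmax | by []].
    have hin : (a, b) \in Rp'.
      move: NE; rewrite /Rp' !inE.
      by case: hR => [->|[->|[->|[->|->]]]]; rewrite ?eqxx ?orbT.
    have : k < m.
      case: (leqP m k) => // hle; exfalso; apply: (hno _ hin).
      apply: (reach_le ha hb hk); lia.
    by split => //; lia.
  have := core hn hb (notR_of ha hb hR) hk => /hmax; split => //; lia.
have sb : sbar n m.
  split; first by exists 1, 1; split.
  move=> s [a [b [ha hb _ hs]]].
  have [hs1 _] := (s_ab_iff n s ha hb).1 hs.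
  by have [] := bound _ _ _ ha hb hs1.
move=> al be; split.
  move=> [ha hb _ [m' [hm' hs']]].
  have E := greatest_uniq hs' sb; subst m'.
  have [hr _] := (s_ab_iff n m ha hb).1 hm'.
  case: (eqVneq (al, be) (1, 1)) => [[-> ->]//|NE].
  have [_ H] := bound _ _ _ ha hb hr.
  by move: NE => /eqP /H; rewrite ltnn.
by move=> [-> ->]; split => //; exists m.
Qed.

Lemma reach11_frob n j : 0 < j -> fib j * fib j.+1 < n -> reach 1 1 n j.+2.
Proof.
move=> hj hlt.
have hpos : 0 < fib j by case: j hj {hlt} => // j _; exact: fib_pos.
have [x [y [hx [hy E]]]] := frobenius (fib_coprime j) hpos (fib_pos _) hlt.
exists x, y; do 2!split => //; split => //.
by rewrite walkE /= uu11.
Qed.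

Lemma bad_reach n j : 1 < n -> 0 < j -> fib j * fib j.+1 < n -> ~ S_is_11 n ->
  exists r, r \in Rp' /\ reach r.1 r.2 n j.+2.
Proof.
move=> hn hj hlt hbad.
have [m hm] := @s_ab_ex 1 1 n isT isT (ltnW hn).
have hjm : j.+2 <= m.
  by have [_ hmax] := (@s_ab_iff 1 1 n m isT isT).1 hm; apply: hmax; apply: reach11_frob.
apply: Classical_Prop.NNPP => H; apply: hbad; apply: (good hn hm) => r hr hreach.
apply: H; exists r; split => //.
have [r1 r2] := Rp'_pos hr.
by apply: (reach_le r1 r2 hreach).
Qed.

Lemma count_le_sub (a : pred nat) N (S : seq nat) :
  (forall n, 0 < n <= N -> a n -> n \in S) -> count a (iota 1 N) <= size S.
Proof.
move=> H; rewrite -size_filter; apply: uniq_leq_size.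
  by apply: filter_uniq; apply: iota_uniq.
move=> x; rewrite mem_filter mem_iota => /andP[ax hx].
by apply: H => //; lia.
Qed.

Definition PP (r : nat * nat) j := uu r.1 r.2 1 0 j.
Definition QQ (r : nat * nat) j := uu r.1 r.2 0 1 j.

Definition Sr N (r : nat * nat) j :=
  [seq PP r j * x.+1 + QQ r j * y.+1 | x <- iota 0 (N %/ PP r j), y <- iota 0 (N %/ QQ r j)].

Lemma Sr_mem N r j n : 0 < PP r j -> 0 < QQ r j -> n <= N ->
  reach r.1 r.2 n j.+1 -> n \in Sr N r j.
Proof.
move=> hP hQ hN [x [y [hx [hy [_ hw]]]]].
rewrite walkE /= uu_lin -/(PP r j) -/(QQ r j) in hw.
have Ex : x = x.-1.+1 by lia.
have Ey : y = y.-1.+1 by lia.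
rewrite -hw Ex Ey; apply: allpairs_f; rewrite mem_iota add0n.
  rewrite -[x.-1 < _]/(x.-1.+1 <= _) leq_divRL //; nia.
rewrite -[y.-1 < _]/(y.-1.+1 <= _) leq_divRL //; nia.
Qed.


Lemma grow al be a1 a2 c i : 4 <= 2 * al + be ->
  2 ^ i <= c * uu al be a1 a2 i -> 2 ^ i.+1 <= c * uu al be a1 a2 i.+1 ->
  forall d, 2 ^ (i + d) <= c * uu al be a1 a2 (i + d).
Proof.
move=> hab h0 h1 d.
suff : 2 ^ (i + d) <= c * uu al be a1 a2 (i + d) /\
       2 ^ (i + d).+1 <= c * uu al be a1 a2 (i + d).+1 by case.
elim: d => [|d [IH1 IH2]]; first by rewrite addn0.
rewrite addnS; split => //.
rewrite uuSS !expnS in IH2 *.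
move: IH1 IH2; set u0 := uu _ _ _ _ (i + d); set u1 := uu _ _ _ _ (i + d).+1.
set p := 2 ^ (i + d) => IH1 IH2.
nia.
Qed.

Lemma QQ_grow r k : r \in Rp' -> 2 ^ k.+1 <= 4 * QQ r k.+1.
Proof.
move=> hr.
have hab : 4 <= 2 * r.1 + r.2 /\ 0 < r.1 /\ 0 < r.2.
  by move: hr; rewrite !inE => /orP[/eqP->|/orP[/eqP->|/orP[/eqP->|/eqP->]]].
case: hab => hab [h1 h2].
have := @grow r.1 r.2 0 1 4 1 hab.
rewrite /QQ => /(_ _ _ k) H; rewrite -add1n; apply: H.
  by rewrite uu1.
rewrite uuSS uu1 uu0; nia.
Qed.

Lemma PP_grow r k : r \in Rp' -> 2 ^ k.+2 <= 8 * PP r k.+2.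
Proof.
move=> hr.
have hab : 4 <= 2 * r.1 + r.2 /\ 0 < r.1 /\ 0 < r.2.
  by move: hr; rewrite !inE => /orP[/eqP->|/orP[/eqP->|/orP[/eqP->|/eqP->]]].
case: hab => hab [h1 h2].
have := @grow r.1 r.2 1 0 8 2 hab.
rewrite /PP => /(_ _ _ k) H; rewrite -add2n; apply: H.
  rewrite uuSS uu1 uu0; nia.
rewrite uuSS uuSS uu1 uu0; nia.
Qed.

Lemma fib_bound k : 3 ^ k * fib k <= 5 ^ k.
Proof.
suff : 3 ^ k * fib k <= 5 ^ k /\ 3 ^ k.+1 * fib k.+1 <= 5 ^ k.+1 by case.
elim: k => [|k [IH1 IH2]]; first by [].
split => //.
rewrite fibSS !expnS in IH1 IH2 *.
move: IH1 IH2; set a := 3 ^ k; set b := 5 ^ k; set f0 := fib k; set f1 := fib k.+1.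
move=> IH1 IH2. nia.
Qed.

Lemma fib_ge k : k <= fib k.+1.
Proof.
suff : k <= fib k.+1 /\ k.+1 <= fib k.+2 by case.
elim: k => [|k [IH1 IH2]]; first by [].
split => //; rewrite fibSS.
case: k IH1 IH2 => [|k] IH1 IH2; first by [].
lia.
Qed.

Lemma expo k : 25 ^ k * (25 + 11 * k) <= 25 * 36 ^ k.
Proof.
elim: k => [|k IH]; first by [].
rewrite !expnS. move: IH; set a := 25 ^ k; set b := 36 ^ k => IH. nia.
Qed.

Lemma window D j : 100 * D ^ 2 <= j -> 32 * D ^ 2 * (fib j.+1 * fib j.+2) <= 4 ^ j.+1.
Proof.
move=> hj.
have hA := fib_bound j.+1. have hB := fib_bound j.+2. have hE := expo j.
have e25 : 25 ^ j = 5 ^ j * 5 ^ j by rewrite -expnMn.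
have e36 : 36 ^ j = 4 ^ j * (3 ^ j * 3 ^ j) by rewrite -!expnMn.
rewrite e25 e36 in hE; rewrite !expnS in hA hB; rewrite [4 ^ j.+1]expnS.
move: hA hB hE.
set t := 3 ^ j; set f := 5 ^ j; set q := 4 ^ j; set A := fib j.+1; set B := fib j.+2.
move=> hA hB hE.
have ht : 0 < t by rewrite expn_gt0.
have h1 : 27 * (t * t) * (A * B) <= 125 * (f * f).
  have := leq_mul hA hB.
  have -> : 3 * t * A * (3 * (3 * t) * B) = 27 * (t * t) * (A * B) by lia.
  have -> : 5 * f * (5 * (5 * f)) = 125 * (f * f) by lia.
  done.
have h3 : 1000 * D ^ 2 * (f * f) <= 25 * (q * (t * t)).
  apply: leq_trans hE.
  have -> : 1000 * D ^ 2 * (f * f) = (f * f) * (1000 * D ^ 2) by lia.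
  apply: leq_mul => //; lia.
have tt0 : 0 < 27 * (t * t) by rewrite muln_gt0 /= muln_gt0 ht.
rewrite -(leq_pmul2l tt0).
have h4 : 27 * (t * t) * (32 * D ^ 2 * (A * B)) <= 32 * D ^ 2 * (125 * (f * f)).
  have -> : 27 * (t * t) * (32 * D ^ 2 * (A * B)) = 32 * D^2 * (27 * (t * t) * (A * B)) by lia.
  by apply: leq_mul.
apply: (leq_trans h4).
have -> : 32 * D ^ 2 * (125 * (f * f)) = 4 * (1000 * D ^ 2 * (f * f)) by lia.
have -> : 27 * (t * t) * (4 * q) = 4 * (27 * (q * (t * t))) by lia.
rewrite leq_pmul2l //; apply: (leq_trans h3); lia.
Qed.


Lemma Sr_small D N j r : r \in Rp' -> 0 < j -> 0 < N -> 32 * D * N <= 4 ^ j.+1 ->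
  D * size (Sr N r j.+1) <= N.
Proof.
move=> hr hj hN hw.
rewrite size_allpairs !size_iota.
have hQ := QQ_grow j hr.
have hP : 2 ^ j.+1 <= 8 * PP r j.+1.
  by case: j hj {hw hQ} => // j _; exact: PP_grow.
move: hP hQ hw; set P := PP r j.+1; set Q := QQ r j.+1 => hP hQ hw.
have e4 : 4 ^ j.+1 = 2 ^ j.+1 * 2 ^ j.+1 by rewrite -expnMn.
rewrite e4 in hw.
have hPQ : 32 * (D * N) <= 32 * (P * Q).
  apply: (leq_trans (_ : _ <= 2 ^ j.+1 * 2 ^ j.+1)); first by lia.
  have := leq_mul hP hQ. lia.
rewrite leq_pmul2l // in hPQ.
have Pp : 0 < P by move: hP; rewrite -/P; have := expn_gt0 2 j.+1; lia.
have Qp : 0 < Q by move: hQ; rewrite -/Q; have := expn_gt0 2 j.+1; lia.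
have ha := leq_trunc_div N P. have hb := leq_trunc_div N Q.
move: ha hb; set a := N %/ P; set b := N %/ Q => ha hb.
have : D * a * b * N <= N * N.
  apply: (leq_trans (_ : _ <= a * b * (P * Q))).
    have -> : D * a * b * N = a * b * (D * N) by lia.
    by apply: leq_mul.
  have -> : a * b * (P * Q) = (a * P) * (b * Q) by lia.
  by apply: leq_mul.
rewrite leq_pmul2r //.
by rewrite mulnA.
Qed.

Lemma bad_bound D : 0 < D -> exists N0, forall N, N0 <= N ->
  D * count (fun n => ~~ `[< S_is_11 n >]) (iota 1 N) <= 6 * N.
Proof.
move=> hD.
set J := (100 * D ^ 2).+1.
exists (2 * D + D * (fib J * fib J.+1)) => N hN.
have hJ : 0 < J by [].
have [j [[hj1 hj2] hjmax]] : exists j, is_greatest (fun k => 0 < k /\ D * (fib k * fib k.+1) <= N) j.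
  apply: (@greatest_ex _ N); first by exists J; split => //; lia.
  move=> k [hk hk2]; have := fib_ge k.
  have : 0 < fib k by case: k hk {hk2} => // k _; exact: fib_pos.
  move=> h0 h1; apply: (leq_trans h1); apply: leq_trans hk2.
  apply: (leq_trans (_ : _ <= fib k * fib k.+1)); first by rewrite leq_pmull.
  by rewrite leq_pmull.
have hJj : J <= j by apply: hjmax; split => //; lia.
have hnext : N < D * (fib j.+1 * fib j.+2).
  case: (ltnP N (D * (fib j.+1 * fib j.+2))) => // hle.
  by have := hjmax j.+1 (conj isT hle); rewrite ltnn.
have hwin := @window D j (ltnW hJj).
have hN0 : 0 < N by lia.
have hw : 32 * D * N <= 4 ^ j.+1.
  apply: leq_trans hwin.
  have -> : 32 * D ^ 2 * (fib j.+1 * fib j.+2) = 32 * D * (D * (fib j.+1 * fib j.+2)) by lia.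
  by rewrite leq_pmul2l ?muln_gt0 // ltnW.
set Fp := fib j * fib j.+1 in hj2.
have Hc : count (fun n => ~~ `[< S_is_11 n >]) (iota 1 N) <=
   size (iota 0 Fp.+2 ++ Sr N (2,1) j.+1 ++ Sr N (1,2) j.+1 ++ Sr N (1,3) j.+1 ++ Sr N (1,4) j.+1).
  apply: count_le_sub => n /andP[hn1 hnN] /asboolPn hbad.
  rewrite !mem_cat.
  case: (leqP n Fp.+1) => hnF.
    by rewrite mem_iota add0n ltnS hnF.
  have hn1' : 1 < n by lia.
  have hnF' : Fp < n by lia.
  have [r [hr hreach]] := bad_reach hn1' hj1 hnF' hbad.
  have [r1 r2] := Rp'_pos hr.
  have hPr : 0 < PP r j.+1.
    have E : j.-1.+2 = j.+1 by lia.
    have := PP_grow j.-1 hr; rewrite E; have := expn_gt0 2 j.+1; lia.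
  have hQr : 0 < QQ r j.+1.
    have := expn_gt0 2 j.+1; have := QQ_grow j hr; lia.
  have := Sr_mem hPr hQr hnN hreach.
  by move: hr; rewrite !inE => /orP[/eqP->|/orP[/eqP->|/orP[/eqP->|/eqP->]]] ->; rewrite ?orbT.
rewrite !size_cat size_iota in Hc.
have s1 := @Sr_small D N j (2,1) isT hj1 hN0 hw.
have s2 := @Sr_small D N j (1,2) isT hj1 hN0 hw.
have s3 := @Sr_small D N j (1,3) isT hj1 hN0 hw.
have s4 := @Sr_small D N j (1,4) isT hj1 hN0 hw.
have := leq_mul (leqnn D) Hc.
nia.
Qed.

Local Open Scope classical_set_scope.
Local Open Scope ring_scope.


Lemma sum_countR (R : realType) N :
  \sum_(1 <= n < N.+1) ((asbool (S_is_11 n))%:R : R) =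
  (count (fun n => asbool (S_is_11 n)) (iota 1 N))%:R.
Proof.
rewrite -natr_sum; congr (_%:R).
rewrite -sum1_count [RHS]big_mkcond /index_iota subSS subn0.
by apply: eq_bigr => i _; case: asbool.
Qed.

Lemma density (R : realType) :
  ((fun N : nat =>
      ((\sum_(1 <= n < N.+1) (asbool (S_is_11 n))%:R) / N%:R : R))
     @ \oo --> (1 : R)).
Proof.
apply/cvgrPdist_le => eps eps0.
have h6 : 0 <= 6 / eps :> R by rewrite divr_ge0 // ltW.
set D := Num.bound (6 / eps).
have hD := archi_boundP h6; rewrite -/D in hD.
have D0 : (0 < D)%N by rewrite -(ltr_nat R); apply: le_lt_trans hD.
have [N0 HN0] := bad_bound D0.
exists (maxn N0 1) => // N /= hN.
rewrite sum_countR.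
have hN0 : (N0 <= N)%N by move: hN; rewrite geq_max => /andP[].
have hN1 : (0 < N)%N by move: hN; rewrite geq_max => /andP[].
have Hb := HN0 N hN0.
set g := count _ _ in Hb *.
set b := count (fun n => asbool (S_is_11 n)) (iota 1 N).
have Hgb : (b + g = N)%N.
  by rewrite /b /g -[RHS](size_iota 1 N) -(count_predC (fun n => asbool (S_is_11 n))).
have Hb' : (D%:R * g%:R <= 6 * N%:R :> R).
  by rewrite -natrM -(natrM R 6) ler_nat.
have HN : (0 < N%:R :> R) by rewrite ltr0n.
have Hgb' : (b%:R + g%:R = N%:R :> R) by rewrite -natrD Hgb.
have hD' : 6 <= eps * D%:R.
  by have := ltW hD; rewrite ler_pdivrMr // mulrC.
have -> : 1 - b%:R / N%:R = g%:R / N%:R :> R.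
  have E : b%:R / N%:R + g%:R / N%:R = 1 :> R by rewrite -mulrDl Hgb' divff // gt_eqF.
  move: E; set x := b%:R / N%:R; set y := g%:R / N%:R => E; lra.
rewrite ger0_norm ?divr_ge0 // ler_pdivrMr //.
have g0 : 0 <= g%:R :> R by [].
have D0' : 0 < D%:R :> R by rewrite ltr0n.
nra.
Qed.

Theorem theorem1p6 (R : realType) :
  (forall n : nat, (1 < n)%N ->
     forall alpha beta : nat, inS n alpha beta -> Rset (alpha, beta)) /\
  (forall alpha beta : nat, Rset (alpha, beta) ->
     exists n : nat, (1 < n)%N /\ inS n alpha beta) /\
  ((fun N : nat =>
      ((\sum_(1 <= n < N.+1) (asbool (S_is_11 n))%:R) / N%:R : R))
     @ \oo --> (1 : R)).
Proof.
split; first exact: part1.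
split; first exact: part2.
exact: density.
Qed.
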